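(* Let $I=[1/2,1)$. For every dyadic rational $y\in I$ (i.e. $y$ has a finite binary expansion), the value $B(y)$ of the binary function defined below lies in $I$. In other words, $B$ maps the dyadic rationals of $I$ into $I$.
   Context: Every dyadic rational $y\in[1/2,1)$ has a unique finite binary expansion $y=(0.1\,a_{2}\cdots a_{\ell})_2$ with last digit $a_\ell=1$; the integer $\ell\ge 1$ is called the (total) length of $y$ (equivalently, $\ell$ is the least integer with $2^{\ell}y\in\mathbb{Z}$, and then $2^\ell y$ is odd). For $n\ge 0$ let $y^*_n=(0.1\{01\}^n)_2$, where $\{01\}^n$ denotes $n$ consecutive repetitions of the block $01$ (so $y^*_0=1/2$, $y^*_1=(0.101)_2=5/8$, etc.), and let $\mathcal{N}=\{y^*_n : n\ge 0\}$ (the ''predecessors''). The binary function is defined, for a dyadic rational $y\in[1/2,1)$ of length $\ell$, by $$B(y)=\begin{cases}1/2, & y\in\mathcal{N},\\ (3y+2^{-\ell})/2, & y\in[1/2,2/3]\setminus\mathcal{N},\\ (3y+2^{-\ell})/4, & y\in(2/3,1).\end{cases}$$ *)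

(* Defs.v *)
From mathcomp Require Import all_boot all_order all_algebra.
From mathcomp Require Import boolp.
Set Implicit Arguments. Unset Strict Implicit. Unset Printing Implicit Defensive.
Import Order.TTheory GRing.Theory Num.Theory.
Local Open Scope ring_scope.

Definition dyadic (y : rat) : Prop := exists l : nat, (2%:R ^+ l * y) \is a Num.int.

Definition dyadic_length (y : rat) (l : nat) : Prop :=
  (2%:R ^+ l * y) \is a Num.int /\
  forall m : nat, (2%:R ^+ m * y) \is a Num.int -> (l <= m)%N.

(* y*_n = (0.1{01}^n)_2 = 1/2 + sum_{i=1}^n 2^{-(2i+1)} *)
Definition ystar (n : nat) : rat :=
  2%:R^-1 + \sum_(1 <= i < n.+1) (2%:R ^+ (2 * i).+1)^-1.

Definition predecessor (y : rat) : Prop := exists n : nat, y = ystar n.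

Definition Bfun (y : rat) (l : nat) : rat :=
  if `[< predecessor y >] then 2%:R^-1
  else if y <= 2%:R / 3%:R then (3%:R * y + (2%:R ^+ l)^-1) / 2%:R
  else (3%:R * y + (2%:R ^+ l)^-1) / 4%:R.

(* Main.v *)
Require Import Defs.
From mathcomp Require Import all_boot all_order all_algebra.
From mathcomp Require Import boolp ring lra zify.
Import Order.TTheory GRing.Theory Num.Theory.
Local Open Scope ring_scope.

Lemma mod3 (m : nat) : (2 ^ m %% 3 = if odd m then 2 else 1)%N.
Proof.
elim: m => [//|m IH]; rewrite expnS -modnMmr IH /=; by case: (odd m).
Qed.

Lemma ystar_closed (n : nat) :
  ystar n * (3%:R * 2%:R ^+ (2 * n).+1) = 2%:R ^+ (2 * n).+2 - 1.
Proof.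
rewrite /ystar; elim: n => [|n IH].
  by rewrite big_geq // addr0 /=; field.
rewrite big_nat_recr //=.
have -> : (2 * n.+1).+1 = ((2 * n).+1 + 2)%N by lia.
move: IH; set S := \sum_(1 <= i < n.+1) _.
set a := 2%:R ^+ (2 * n).+1 : rat.
have ha : a != 0 by rewrite expf_neq0.
rewrite !exprD [2%:R ^+ (2 * n).+2]exprS -/a => IH.
rewrite [2%:R ^+ (_ + 2).+1]exprS exprD -/a.
have HS : S = ((2^-1 + S) * (3%:R * a)) / (3%:R * a) - 2^-1.
  by field.
rewrite IH in HS.
rewrite HS. field. exact: ha.
Qed.

Theorem mainTheorem1 (y : rat) (l : nat) :
  dyadic y -> 2%:R^-1 <= y -> y < 1 -> dyadic_length y l ->
  2%:R^-1 <= Bfun y l /\ Bfun y l < 1.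
Proof.
move=> _ hy1 hy2 [/intrP [k hk] _].
set P : rat := 2%:R ^+ l in hk.
have hP : 0 < P by rewrite exprn_gt0.
have hPi : P^-1 * P = 1 by rewrite mulVf // gt_eqF.
have hPi0 : 0 < P^-1 by rewrite invr_gt0.
have hPn : P = (2 ^ l)%N%:R by rewrite natrX.
have hk0 : 0 < k%:~R :> rat by rewrite -hk; nra.
case: k hk hk0 => [K|K] hk hk0; last first.
  by exfalso; move: hk0; rewrite NegzE ltr0z.
rewrite -pmulrn in hk hk0.
rewrite /Bfun; case: (asboolP (predecessor y)) => [_|Hnp]; first by split; lra.
rewrite -/P; case: ifP => h23.
  have h1 : 3%:R * K%:R <= 2 * P :> rat by nra.
  have h1n : (3 * K <= 2 ^ l.+1)%N.
    by rewrite -(ler_nat rat) natrM natrX exprS -/P.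
  have hne : (3 * K != 2 ^ l.+1)%N.
    apply/negP => /eqP E; move: (mod3 l.+1); rewrite -E.
    by rewrite modnMr; case: odd.
  have hne2 : (3 * K + 1 != 2 ^ l.+1)%N.
    apply/negP => /eqP E; apply: Hnp.
    move: (mod3 l.+1); rewrite -E -modnDml modnMr /=.
    case: (boolP (odd l)) => // hodd _.
    exists l./2.
    have hl : l = (2 * l./2).+1 by rewrite -{1}(odd_double_half l) hodd; lia.
    have E' : 3%:R * K%:R + 1 = 2 * P :> rat.
      by rewrite -[2 * P]/((2 : rat) * 2%:R ^+ l) -exprS -natrX -E natrD natrM.
    have := ystar_closed l./2; rewrite -hl.
    rewrite exprS -/P => H.
    have hP0 : P != 0 by rewrite gt_eqF.
    apply: (mulIf (_ : 3%:R * P != 0)); first by rewrite mulf_neq0.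
    rewrite H. nra.
  have h2 : (3 * K + 2 <= 2 ^ l.+1)%N by lia.
  have h2r : 3%:R * K%:R + 2 <= 2 * P :> rat.
    by move: h2; rewrite -(ler_nat rat) natrD natrM natrX exprS -/P.
  split; nra.
have h3 : K%:R < P :> rat by nra.
have h3n' : (K < 2 ^ l)%N by rewrite -(ltr_nat rat) natrX -/P.
have h3n : (K + 1 <= 2 ^ l)%N by lia.
have h3r : K%:R + 1 <= P :> rat.
  by move: h3n; rewrite -(ler_nat rat) natrD natrX -/P.
have h23' : 2%:R / 3%:R < y by rewrite ltNge h23.
split; nra.
Qed.
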